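(* Let $\mathcal{X}\subseteq\mathbb{R}^N$, $\Theta\subseteq\mathbb{R}^K$, and let $p(\mathbf{x},\boldsymbol{\theta})$ be a joint p.d.f. on $\mathcal{X}\times\Theta$ with marginal $p(\mathbf{x})$, posterior $p(\boldsymbol{\theta}\mid\mathbf{x})$ and support $\mathcal{S}_{\mathcal{X}}=\{\mathbf{x}: p(\mathbf{x})>0\}$. Let $\mathbf{g}=(g_1,\dots,g_L)^{T}$ with each $g_\ell\in\mathcal{W}_2$, and let $\boldsymbol{\varphi}=(\varphi_1,\dots,\varphi_M)^{T}$ with each $\varphi_m\in\mathcal{W}_2$, the functions $\varphi_1,\dots,\varphi_M$ being linearly independent in $\mathcal{L}_2(p(\mathbf{x},\boldsymbol{\theta}))$. Let $\boldsymbol{\zeta}=(\zeta_1,\dots,\zeta_L)^{T}$ with each $\zeta_\ell\in\mathcal{W}_2$ satisfying, for a.e. $\mathbf{x}\in\mathcal{S}_{\mathcal{X}}$, $\mathrm{E}_{\boldsymbol{\theta}\mid\mathbf{x}}[\zeta_\ell(\mathbf{x},\boldsymbol{\theta})\,\boldsymbol{\varphi}(\mathbf{x},\boldsymbol{\theta})]=\mathbf{0}$. Assume that $\mathbf{Q}_{\boldsymbol{\varphi}\mid\mathbf{x}}$ is invertible for a.e. $\mathbf{x}\in\mathcal{S}_{\mathcal{X}}$. Then \[ \mathbf{Q}_{(\mathbf{g}-\boldsymbol{\zeta})}\succeq \mathrm{E}_{\mathbf{x}}\big[\mathbf{R}_{\mathbf{g}\boldsymbol{\varphi}\mid\mathbf{x}}\,\mathbf{Q}_{\boldsymbol{\varphi}\mid\mathbf{x}}^{-1}\,\mathbf{R}_{\mathbf{g}\boldsymbol{\varphi}\mid\mathbf{x}}^{T}\big]\succeq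 \mathbf{R}_{\mathbf{g}\boldsymbol{\varphi}}\,\mathbf{Q}_{\boldsymbol{\varphi}}^{-1}\,\mathbf{R}_{\mathbf{g}\boldsymbol{\varphi}}^{T}, \] where $\mathbf{A}\succeq\mathbf{B}$ means $\mathbf{A}-\mathbf{B}$ is positive semi-definite.
   Context: $\mathcal{L}_2(p(\mathbf{x},\boldsymbol{\theta}))$ is the space of real functions $\zeta(\mathbf{x},\boldsymbol{\theta})$ with $\mathrm{E}_{\mathbf{x},\boldsymbol{\theta}}[\zeta^2]<\infty$ (expectation w.r.t. the joint p.d.f.). $\mathcal{W}_2$ is the subspace of those $\zeta\in\mathcal{L}_2(p(\mathbf{x},\boldsymbol{\theta}))$ such that for a.e. $\mathbf{x}\in\mathcal{S}_{\mathcal{X}}$, $\mathrm{E}_{\boldsymbol{\theta}\mid\mathbf{x}}[\zeta(\mathbf{x},\boldsymbol{\theta})^2]<\infty$, where $\mathrm{E}_{\boldsymbol{\theta}\mid\mathbf{x}}$ denotes expectation w.r.t. $p(\boldsymbol{\theta}\mid\mathbf{x})$ and $\mathrm{E}_{\mathbf{x}}$ expectation w.r.t. $p(\mathbf{x})$. Define the matrices $\mathbf{Q}_{(\mathbf{g}-\boldsymbol{\zeta})}=\mathrm{E}_{\mathbf{x},\boldsymbol{\theta}}[(\mathbf{g}-\boldsymbol{\zeta})(\mathbf{g}-\boldsymbol{\zeta})^{T}]$ ($L\times L$), $\mathbf{R}_{\mathbf{g}\boldsymbol{\varphi}}=\mathrm{E}_{\mathbf{x},\boldsymbol{\theta}}[\mathbf{g}(\mathbf{x},\boldsymbol{\theta})\boldsymbol{\varphi}(\mathbf{x},\boldsymbol{\theta})^{T}]$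 ($L\times M$), $\mathbf{Q}_{\boldsymbol{\varphi}}=\mathrm{E}_{\mathbf{x},\boldsymbol{\theta}}[\boldsymbol{\varphi}\boldsymbol{\varphi}^{T}]$ ($M\times M$), and their posterior counterparts $\mathbf{R}_{\mathbf{g}\boldsymbol{\varphi}\mid\mathbf{x}}=\mathrm{E}_{\boldsymbol{\theta}\mid\mathbf{x}}[\mathbf{g}(\mathbf{x},\boldsymbol{\theta})\boldsymbol{\varphi}(\mathbf{x},\boldsymbol{\theta})^{T}]$ and $\mathbf{Q}_{\boldsymbol{\varphi}\mid\mathbf{x}}=\mathrm{E}_{\boldsymbol{\theta}\mid\mathbf{x}}[\boldsymbol{\varphi}(\mathbf{x},\boldsymbol{\theta})\boldsymbol{\varphi}(\mathbf{x},\boldsymbol{\theta})^{T}]$. *)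

(* Defs.v *)
From HB Require Import structures.
From mathcomp Require Import all_boot all_order all_algebra.
From mathcomp Require Import all_classical all_reals all_analysis.
Set Implicit Arguments.
Unset Strict Implicit.
Unset Printing Implicit Defensive.
Import Order.TTheory GRing.Theory Num.Theory.
Import numFieldNormedType.Exports.
Local Open Scope classical_set_scope.
Local Open Scope ring_scope.

(* Setting: X (observations) and Th (parameters) are measurable spaces with
   sigma-finite reference measures mu, nu (Lebesgue measure on R^N, R^K in the
   paper); p : X * Th -> R is the joint density w.r.t. the product measure
   mu \x nu. *)

Section Bayes.
Context {R : realType} {d1 d2 : measure_display}
  {X : measurableType d1} {Th : measurableType d2}.
Variables (mu : {sigma_finite_measure set X -> \bar R})
          (nu : {sigma_finite_measure set Th -> \bar R})
          (p : X * Th -> R).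

Definition is_joint_pdf : Prop :=
  [/\ measurable_fun setT p, (forall z, 0 <= p z) &
      (\int[(mu \x nu)%E]_z (p z)%:E = 1)%E].

Definition Ejoint (f : X * Th -> R) : R :=
  Rintegral (mu \x nu)%E setT (fun z => f z * p z).

Definition marg (x : X) : R := fine (\int[nu]_t (p (x, t))%:E)%E.

Definition suppX : set X := [set x | 0 < marg x].

Definition post (x : X) (t : Th) : R := p (x, t) / marg x.

Definition Epost (f : X * Th -> R) (x : X) : R :=
  Rintegral nu setT (fun t => f (x, t) * post x t).

Definition Emarg (h : X -> R) : R :=
  Rintegral mu setT (fun x => h x * marg x).

Definition inL2 (f : X * Th -> R) : Prop :=
  measurable_fun setT f /\
  (\int[(mu \x nu)%E]_z ((f z) ^+ 2 * p z)%:E < +oo)%E.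

Definition inW2 (f : X * Th -> R) : Prop :=
  inL2 f /\
  {ae mu, forall x, suppX x ->
     (\int[nu]_t ((f (x, t)) ^+ 2 * post x t)%:E < +oo)%E}.

(* linear independence in L_2(p(x,theta)): a linear combination which is the
   zero element of L_2 (i.e. vanishes p(x,theta)-almost everywhere) is trivial *)
Definition lin_indep_L2 (M : nat) (phi : 'I_M -> X * Th -> R) : Prop :=
  forall c : 'I_M -> R,
    {ae (mu \x nu)%E, forall z, p z != 0 -> \sum_(m < M) c m * phi m z = 0} ->
    forall m, c m = 0.

Definition Qmat (L : nat) (f : 'I_L -> X * Th -> R) : 'M[R]_L :=
  \matrix_(i, j) Ejoint (fun z => f i z * f j z).

Definition Rmat (L M : nat) (g : 'I_L -> X * Th -> R) (phi : 'I_M -> X * Th -> R)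
  : 'M[R]_(L, M) := \matrix_(i, j) Ejoint (fun z => g i z * phi j z).

Definition Qpost (M : nat) (phi : 'I_M -> X * Th -> R) (x : X) : 'M[R]_M :=
  \matrix_(i, j) Epost (fun z => phi i z * phi j z) x.

Definition Rpost (L M : nat) (g : 'I_L -> X * Th -> R) (phi : 'I_M -> X * Th -> R)
  (x : X) : 'M[R]_(L, M) := \matrix_(i, j) Epost (fun z => g i z * phi j z) x.

Definition middle_mat (L M : nat) (g : 'I_L -> X * Th -> R)
  (phi : 'I_M -> X * Th -> R) : 'M[R]_L :=
  \matrix_(i, j) Emarg (fun x =>
     (Rpost g phi x *m invmx (Qpost phi x) *m (Rpost g phi x)^T) i j).

End Bayes.

Definition psd {R : realType} (L : nat) (A : 'M[R]_L) : Prop :=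
  forall v : 'cV[R]_L, 0 <= (v^T *m A *m v) ord0 ord0.

Definition loewner_ge {R : realType} (L : nat) (A B : 'M[R]_L) : Prop :=
  psd (A - B).

(* Main.v *)
Require Import Defs.
From HB Require Import structures.
From mathcomp Require Import all_boot all_order all_algebra.
From mathcomp Require Import all_classical all_reals all_analysis.
From mathcomp Require Import measurable_realfun.
From mathcomp Require Import ring lra.
Set Implicit Arguments.
Unset Strict Implicit.
Unset Printing Implicit Defensive.
Import Order.TTheory GRing.Theory Num.Theory.
Import numFieldNormedType.Exports.
Local Open Scope classical_set_scope.
Local Open Scope ring_scope.

From HB Require Import structures.
From mathcomp Require Import all_boot all_order all_algebra.
From mathcomp Require Import all_classical all_reals all_analysis.
From mathcomp Require Import measurable_realfun.
Set Implicit Arguments.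
Unset Strict Implicit.
Unset Printing Implicit Defensive.
Import Order.TTheory GRing.Theory Num.Theory.
Import numFieldNormedType.Exports.
Local Open Scope classical_set_scope.
Local Open Scope ring_scope.
Section MeasA.
Context {R : realType} {d : measure_display} {T : measurableType d}.

Lemma measurable_inv_R : measurable_fun [set: R] (@GRing.inv R).
Proof.
have -> : [set: R] = ~` [set 0] `|` [set 0] by rewrite setUC setUCr.
apply/measurable_funU; [exact: measurableC|by []|split].
- apply: measurable_realfun.open_continuous_measurable_fun.
    exact/closed_openC/accessible_closed_set1/hausdorff_accessible/Rhausdorff.
  move=> x; rewrite inE /= => /eqP x0; exact: inv_continuous.
- exact: measurable_fun_set1.
Qed.

Lemma measurable_funV_R (f : T -> R) : measurable_fun setT f ->
  measurable_fun setT (fun x => (f x)^-1).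
Proof. by move=> mf; apply: measurableT_comp mf; exact: measurable_inv_R. Qed.

Lemma measurable_prod_R I (s : seq I) (h : I -> T -> R) :
  (forall i, measurable_fun setT (h i)) ->
  measurable_fun setT (fun x => \prod_(i <- s) h i x).
Proof.
move=> mh; elim: s => [|a s IH].
  by under eq_fun do rewrite big_nil; exact: measurable_cst.
under eq_fun do rewrite big_cons.
exact: measurable_funM.
Qed.

Lemma measurable_sum_R I (s : seq I) (h : I -> T -> R) :
  (forall i, measurable_fun setT (h i)) ->
  measurable_fun setT (fun x => \sum_(i <- s) h i x).
Proof. by move=> mh; apply: measurable_sum. Qed.

Lemma measurable_det n (A : T -> 'M[R]_n) :
  (forall i j, measurable_fun setT (fun x => A x i j)) ->
  measurable_fun setT (fun x => \det (A x)).
Proof.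
move=> mA; rewrite /determinant.
apply: measurable_sum_R => s.
apply: measurable_funM; first exact: measurable_cst.
by apply: measurable_prod_R => i; exact: mA.
Qed.

Lemma measurable_invmx n (A : T -> 'M[R]_n) :
  (forall i j, measurable_fun setT (fun x => A x i j)) ->
  forall i j, measurable_fun setT (fun x => invmx (A x) i j).
Proof.
move=> mA i j.
have mdet := measurable_det mA.
rewrite /invmx.
under eq_fun => x do rewrite (fun_if (fun M : 'M[R]_n => M i j)) mxE unitmxE unitfE.
apply: measurable_fun_ifT.
- under eq_fun do rewrite -(negbK (_ != 0)) negbK.
  apply: measurable_neg.
  by apply: measurable_fun_eqr => //; exact: measurable_cst.
- apply: measurable_funM; first exact: measurable_funV_R.
  rewrite /adjugate.
  under eq_fun do rewrite mxE /cofactor.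
  apply: measurable_funM; first exact: measurable_cst.
  apply: measurable_det => k l.
  by under eq_fun do rewrite !mxE; exact: mA.
- exact: mA.
Qed.

End MeasA.

Section WI.
Context {R : realType} {d : measure_display} {T : measurableType d}.
Variables (m : {measure set T -> \bar R}) (w : T -> R).
Hypothesis mw : measurable_fun setT w.
Hypothesis w0 : forall x, 0 <= w x.
Implicit Types (f h A B : T -> R).

Definition L2w (f : T -> R) := measurable_fun setT f /\
  (\int[m]_x ((f x) ^+ 2 * w x)%:E < +oo)%E.
Definition WI (f : T -> R) := Rintegral m setT (fun x => f x * w x).
Definition wint (f : T -> R) := m.-integrable setT (EFin \o (fun x => f x * w x)).

Lemma lt_integral_bound (F G : T -> R) :
  measurable_fun setT F -> measurable_fun setT G ->
  (forall x, 0 <= F x <= G x) ->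
  (\int[m]_x (G x)%:E < +oo)%E -> (\int[m]_x (F x)%:E < +oo)%E.
Proof.
move=> mF mG FG Goo; apply: le_lt_trans Goo.
apply: ge0_le_integral => //.
all: try (by move=> x _; rewrite lee_fin; case/andP: (FG x)).
all: try exact/measurable_EFinP.
Qed.

Lemma integral_add_lty (F G : T -> R) :
  measurable_fun setT F -> measurable_fun setT G ->
  (forall x, 0 <= F x) -> (forall x, 0 <= G x) ->
  (\int[m]_x (F x)%:E < +oo)%E -> (\int[m]_x (G x)%:E < +oo)%E ->
  (\int[m]_x (F x + G x)%:E < +oo)%E.
Proof.
move=> mF mG F0 G0 Fo Go.
under eq_integral do rewrite EFinD.
rewrite ge0_integralD//.
- exact: lte_add_pinfty.
- by move=> x _; rewrite lee_fin.
- exact/measurable_EFinP.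
- by move=> x _; rewrite lee_fin.
- exact/measurable_EFinP.
Qed.

Lemma integral_scale_lty (c : R) (F : T -> R) :
  measurable_fun setT F -> (forall x, 0 <= F x) -> 0 <= c ->
  (\int[m]_x (F x)%:E < +oo)%E -> (\int[m]_x (c * F x)%:E < +oo)%E.
Proof.
move=> mF F0 c0 Fo.
under eq_integral do rewrite EFinM.
rewrite ge0_integralZl//.
- exact: lte_mul_pinfty.
- exact/measurable_EFinP.
- by move=> x _; rewrite lee_fin.
Qed.

Lemma sqw_ge0 f x : 0 <= f x ^+ 2 * w x.
Proof. by rewrite mulr_ge0 ?sqr_ge0. Qed.

Lemma measurable_sqw f : measurable_fun setT f ->
  measurable_fun setT (fun x => f x ^+ 2 * w x).
Proof. by move=> mf; apply: measurable_funM => //; exact: measurable_funX. Qed.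

Lemma L2w_add f h : L2w f -> L2w h -> L2w (fun x => f x + h x).
Proof.
move=> [mf fo] [mh ho]; split; first exact: measurable_funD.
apply: (@lt_integral_bound _ (fun x => 2 * (f x ^+ 2 * w x) + 2 * (h x ^+ 2 * w x))).
- by apply: measurable_sqw; exact: measurable_funD.
- apply: measurable_funD; apply: measurable_funM; try exact: measurable_cst;
  exact: measurable_sqw.
- move=> x /=; apply/andP; split; first exact: (sqw_ge0 (fun x => f x + h x)).
  have := w0 x; set a := f x; set b := h x; set c := w x => c0.
  have := mulr_ge0 c0 (sqr_ge0 (a - b)); nra.
- apply: integral_add_lty.
  + by apply: measurable_funM; [exact: measurable_cst|exact: measurable_sqw].
  + by apply: measurable_funM; [exact: measurable_cst|exact: measurable_sqw].
  + by move=> x; rewrite mulr_ge0 ?sqw_ge0.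
  + by move=> x; rewrite mulr_ge0 ?sqw_ge0.
  + by apply: integral_scale_lty => //; [exact: measurable_sqw|exact: sqw_ge0].
  + by apply: integral_scale_lty => //; [exact: measurable_sqw|exact: sqw_ge0].
Qed.

Lemma L2w_scale c f : L2w f -> L2w (fun x => c * f x).
Proof.
move=> [mf fo]; split; first by apply: measurable_funM => //; exact: measurable_cst.
under eq_integral do rewrite exprMn -mulrA.
apply: integral_scale_lty => //; [exact: measurable_sqw|exact: sqw_ge0|exact: sqr_ge0].
Qed.

Lemma L2w_0 : L2w (fun _ => 0).
Proof.
split; first exact: measurable_cst.
under eq_integral do rewrite expr0n /= mul0r.
by rewrite integral0 ltry.
Qed.

Lemma L2w_sum I (s : seq I) (a : I -> R) (f : I -> T -> R) :
  (forall i, L2w (f i)) -> L2w (fun x => \sum_(i <- s) a i * f i x).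
Proof.
move=> hf; elim: s => [|i s IH].
  by under eq_fun do rewrite big_nil; exact: L2w_0.
under eq_fun do rewrite big_cons.
by apply: L2w_add => //; exact: L2w_scale.
Qed.

Lemma wint_prod f h : L2w f -> L2w h -> wint (fun x => f x * h x).
Proof.
move=> [mf fo] [mh ho]; apply/integrableP; split.
  by apply/measurable_EFinP; apply: measurable_funM => //; exact: measurable_funM.
rewrite (eq_integral (fun x => (`|f x * h x * w x|)%:E)) //.
apply: (@lt_integral_bound _ (fun x => f x ^+ 2 * w x + h x ^+ 2 * w x)).
- apply: measurableT_comp => //; apply: measurable_funM => //.
  exact: measurable_funM.
- by apply: measurable_funD; exact: measurable_sqw.
- move=> x /=; rewrite normr_ge0 /= -mulrDl normrM (ger0_norm (w0 x)).
  apply: ler_wpM2r => //; rewrite normrM.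
  have := normr_ge0 (f x); have := normr_ge0 (h x).
  rewrite -(real_normK (num_real (f x))) -(real_normK (num_real (h x))).
  set a := `|f x|; set b := `|h x| => b0 a0; nra.
- apply: integral_add_lty => //; try exact: measurable_sqw; exact: sqw_ge0.
Qed.

Lemma WI_add f h : wint f -> wint h ->
  WI (fun x => f x + h x) = WI f + WI h.
Proof.
move=> hf hh; rewrite /WI -RintegralD//.
by apply: eq_Rintegral => x _; rewrite mulrDl.
Qed.

Lemma WI_scale c f : wint f -> WI (fun x => c * f x) = c * WI f.
Proof.
move=> hf; rewrite /WI -RintegralZl//.
by apply: eq_Rintegral => x _; rewrite mulrA.
Qed.

Lemma wint_add f h : wint f -> wint h -> wint (fun x => f x + h x).
Proof.
move=> hf hh; rewrite /wint.
have -> : EFin \o (fun x => (f x + h x) * w x) =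
  (EFin \o (fun x => f x * w x)) \+ (EFin \o (fun x => h x * w x)).
  by apply/funext => x /=; rewrite mulrDl EFinD.
exact: integrableD.
Qed.

Lemma wint_scale c f : wint f -> wint (fun x => c * f x).
Proof.
move=> hf; rewrite /wint.
have -> : EFin \o (fun x => (c * f x) * w x) =
  (fun x => (c%:E * (EFin \o (fun x => (f x * w x)%R)) x)%E).
  by apply/funext => x /=; rewrite -mulrA EFinM.
exact: integrableZl.
Qed.

Lemma wint_0 : wint (fun _ => 0).
Proof.
rewrite /wint.
have -> : EFin \o (fun x => 0 * w x) = cst 0%E by apply/funext => x /=; rewrite mul0r.
exact: integrable0.
Qed.

Lemma WI_0 : WI (fun _ => 0) = 0.
Proof.
rewrite /WI /Rintegral.
under eq_integral do rewrite mul0r.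
by rewrite integral0.
Qed.

Lemma wint_sum I (s : seq I) (F : I -> T -> R) :
  (forall i, wint (F i)) -> wint (fun x => \sum_(i <- s) F i x).
Proof.
move=> hF; elim: s => [|i s IH].
  by under eq_fun do rewrite big_nil; exact: wint_0.
under eq_fun do rewrite big_cons.
exact: wint_add.
Qed.

Lemma WI_sum I (s : seq I) (F : I -> T -> R) :
  (forall i, wint (F i)) -> WI (fun x => \sum_(i <- s) F i x) = \sum_(i <- s) WI (F i).
Proof.
move=> hF; elim: s => [|i s IH].
  by rewrite big_nil; under eq_fun do rewrite big_nil; exact: WI_0.
rewrite big_cons -IH.
under eq_fun do rewrite big_cons.
by rewrite WI_add //; exact: wint_sum.
Qed.

Lemma WI_bilin I J (s : seq I) (t : seq J) (a : I -> R) (f : I -> T -> R)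
  (b : J -> R) (h : J -> T -> R) :
  (forall i, L2w (f i)) -> (forall j, L2w (h j)) ->
  WI (fun x => (\sum_(i <- s) a i * f i x) * (\sum_(j <- t) b j * h j x)) =
  \sum_(i <- s) \sum_(j <- t) a i * b j * WI (fun x => f i x * h j x).
Proof.
move=> hf hh.
have -> : (fun x => (\sum_(i <- s) a i * f i x) * (\sum_(j <- t) b j * h j x)) =
  (fun x => \sum_(i <- s) \sum_(j <- t) (a i * b j) * (f i x * h j x)).
  apply/funext => x; rewrite mulr_suml; apply: eq_bigr => i _.
  by rewrite mulr_sumr; apply: eq_bigr => j _; rewrite mulrACA.
rewrite WI_sum; last first.
  by move=> i; apply: wint_sum => j; apply: wint_scale; exact: wint_prod.
apply: eq_bigr => i _; rewrite WI_sum; last first.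
  by move=> j; apply: wint_scale; exact: wint_prod.
by apply: eq_bigr => j _; rewrite WI_scale //; exact: wint_prod.
Qed.

Lemma WI_sqB A B : L2w A -> L2w B ->
  WI (fun x => (A x - B x) * (A x - B x)) =
  WI (fun x => A x * A x) - 2 * WI (fun x => A x * B x) + WI (fun x => B x * B x).
Proof.
move=> hA hB.
have -> : (fun x => (A x - B x) * (A x - B x)) =
  (fun x => (A x * A x + (-2) * (A x * B x)) + B x * B x).
  by apply/funext => x; ring.
rewrite WI_add; [|apply: wint_add; [|apply: wint_scale]|]; try exact: wint_prod.
rewrite WI_add; [|exact: wint_prod|apply: wint_scale; exact: wint_prod].
by rewrite WI_scale; [ring|exact: wint_prod].
Qed.

Lemma WI_sq_ge0 f : 0 <= WI (fun x => f x * f x).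
Proof. by apply: Rintegral_ge0 => x _; rewrite mulr_ge0 // -expr2 sqr_ge0. Qed.

End WI.

Definition qf {R : realType} n k (v : 'cV[R]_n) (A : 'M[R]_(n, k)) (b : 'cV[R]_k) : R :=
  (v^T *m A *m b) ord0 ord0.

Lemma qfE {R : realType} n k (v : 'cV[R]_n) (A : 'M[R]_(n, k)) (b : 'cV[R]_k) :
  qf v A b = \sum_(i < n) \sum_(j < k) v i ord0 * b j ord0 * A i j.
Proof.
rewrite /qf mxE exchange_big /=; apply: eq_bigr => i _.
rewrite mxE big_distrl /=; apply: eq_bigr => j _.
rewrite !mxE /=; ring.
Qed.

Section MatAlg.
Context {R : realType}.

Lemma qf_w_left n k (v : 'cV[R]_n) (Rg : 'M[R]_(n, k)) (Q : 'M[R]_k) :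
  qf v Rg (invmx Q *m Rg^T *m v) = qf v (Rg *m invmx Q *m Rg^T) v.
Proof. by rewrite /qf !mulmxA. Qed.

Lemma qf_w_Q n k (v : 'cV[R]_n) (Rg : 'M[R]_(n, k)) (Q : 'M[R]_k) (b : 'cV[R]_k) :
  Q^T = Q -> Q \in unitmx ->
  qf (invmx Q *m Rg^T *m v) Q b = qf v Rg b.
Proof.
move=> QT Qu; rewrite /qf !trmx_mul trmxK trmx_inv QT.
by rewrite -!mulmxA (mulmxA (invmx Q)) mulVmx // mul1mx.
Qed.

End MatAlg.

Section Pointwise.
Context {R : realType} {d : measure_display} {T : measurableType d}.
Variables (m : {measure set T -> \bar R}) (w : T -> R).
Hypothesis mw : measurable_fun setT w.
Hypothesis w0 : forall x, 0 <= w x.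
Let L2sum := @L2w_sum _ _ _ m w mw w0.
Let wprod := @wint_prod _ _ _ m w mw w0.
Let WIsqB := @WI_sqB _ _ _ m w mw w0.
Let WIbil := @WI_bilin _ _ _ m w mw w0.
Let L2add := @L2w_add _ _ _ m w mw w0.

Lemma L2w_sub (f h : T -> R) : L2w m w f -> L2w m w h -> L2w m w (fun x => f x - h x).
Proof.
move=> hf hh.
have -> : (fun x => f x - h x) = (fun x => f x + (-1) * h x).
  by apply/funext => x; rewrite mulN1r.
by apply: L2add => //; exact: L2w_scale.
Qed.

Lemma WI_comb n k (a : 'cV[R]_n) (f : 'I_n -> T -> R) (b : 'cV[R]_k) (h : 'I_k -> T -> R) :
  (forall i, L2w m w (f i)) -> (forall j, L2w m w (h j)) ->
  WI m w (fun x => (\sum_i a i ord0 * f i x) * (\sum_j b j ord0 * h j x)) =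
  qf a (\matrix_(i, j) WI m w (fun x => f i x * h j x)) b.
Proof.
move=> hf hh; rewrite WIbil // qfE; apply: eq_bigr => i _; apply: eq_bigr => j _.
by rewrite mxE.
Qed.

Variables (L M : nat) (g z : 'I_L -> T -> R) (phi : 'I_M -> T -> R).
Hypothesis hg : forall l, L2w m w (g l).
Hypothesis hz : forall l, L2w m w (z l).
Hypothesis hphi : forall k, L2w m w (phi k).
Hypothesis horth : forall l k, WI m w (fun x => z l x * phi k x) = 0.

Let Pm := \matrix_(i, j) WI m w (fun x => phi i x * phi j x).
Let Rg := \matrix_(i, j) WI m w (fun x => g i x * phi j x).
Hypothesis Pu : Pm \in unitmx.

Lemma Pm_sym : Pm^T = Pm.
Proof.
apply/matrixP => i j; rewrite !mxE; congr (WI _ _ _).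
by apply/funext => x; rewrite mulrC.
Qed.

Let H := Rg *m invmx Pm *m Rg^T.

Lemma qfH_eq (v : 'cV[R]_L) :
  let wv := invmx Pm *m Rg^T *m v in
  WI m w (fun x => (\sum_k wv k ord0 * phi k x) * (\sum_k wv k ord0 * phi k x)) =
  qf v H v.
Proof.
move=> wv; rewrite WI_comb // -/Pm qf_w_Q ?Pm_sym //.
exact: qf_w_left.
Qed.

Lemma pointwise_P0 (v : 'cV[R]_L) : 0 <= qf v H v.
Proof. rewrite -qfH_eq; exact: (WI_sq_ge0 m w0 (fun x => \sum_k (invmx Pm *m Rg^T *m v) k ord0 * phi k x)). Qed.

Lemma pointwise_P1 (v : 'cV[R]_L) :
  qf v H v <= WI m w (fun x => (\sum_l v l ord0 * (g l x - z l x)) *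
                               (\sum_l v l ord0 * (g l x - z l x))).
Proof.
set wv := invmx Pm *m Rg^T *m v.
set u := fun x => \sum_l v l ord0 * (g l x - z l x).
set psi := fun x => \sum_k wv k ord0 * phi k x.
have hu : L2w m w u by apply: L2sum => l; exact: L2w_sub.
have hpsi : L2w m w psi by apply: L2sum.
have := WI_sq_ge0 m w0 (fun x => u x - psi x).
rewrite WIsqB // qfH_eq.
have -> : WI m w (fun x => u x * psi x) = qf v H v.
  rewrite /u /psi WI_comb //; last by move=> l; exact: L2w_sub.
  have -> : (\matrix_(i, j) WI m w (fun x => (g i x - z i x) * phi j x)) = Rg.
    apply/matrixP => i j; rewrite !mxE.
    have -> : (fun x => (g i x - z i x) * phi j x) =
      (fun x => g i x * phi j x + (-1) * (z i x * phi j x)).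
      by apply/funext => x; rewrite mulN1r mulrBl.
    rewrite WI_add //; last by apply: wint_scale; exact: wprod.
      by rewrite WI_scale ?horth ?mulr0 ?addr0 //; exact: wprod.
    exact: wprod.
  exact: qf_w_left.
lra.
Qed.

Lemma pointwise_P2 (v : 'cV[R]_L) (a : 'cV[R]_M) :
  WI m w (fun x => (\sum_l v l ord0 * g l x) * (\sum_l v l ord0 * g l x)) -
  WI m w (fun x => (\sum_l v l ord0 * g l x - \sum_k a k ord0 * phi k x) *
                   (\sum_l v l ord0 * g l x - \sum_k a k ord0 * phi k x))
  <= qf v H v.
Proof.
set wv := invmx Pm *m Rg^T *m v.
set ug := fun x => \sum_l v l ord0 * g l x.
set ua := fun x => \sum_k a k ord0 * phi k x.
set psi := fun x => \sum_k wv k ord0 * phi k x.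
have hug : L2w m w ug by apply: L2sum.
have hua : L2w m w ua by apply: L2sum.
have hpsi : L2w m w psi by apply: L2sum.
have := WI_sq_ge0 m w0 (fun x => psi x - ua x).
rewrite WIsqB // qfH_eq.
rewrite (WIsqB hug hua).
rewrite /psi /ua /ug !WI_comb // -/Pm -/Rg qf_w_Q ?Pm_sym //.
lra.
Qed.

End Pointwise.

Section Bayes1.
Context {R : realType} {d1 d2 : measure_display}
  {X : measurableType d1} {Th : measurableType d2}.
Variables (mu : {sigma_finite_measure set X -> \bar R})
          (nu : {sigma_finite_measure set Th -> \bar R})
          (p : X * Th -> R).
Hypothesis mp : measurable_fun setT p.
Hypothesis p0 : forall z, 0 <= p z.

Lemma measurable_Rintegral_section (K : X * Th -> R) :
  measurable_fun setT K ->
  measurable_fun setT (fun x => Rintegral nu setT (fun t => K (x, t))).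
Proof.
move=> mK; rewrite /Rintegral.
apply: measurableT_comp; first exact: fine_measurable.
have mKe : measurable_fun setT (EFin \o K) by exact/measurable_EFinP.
under eq_fun do rewrite integralE.
apply: emeasurable_funB.
- have h := (@measurable_fun_fubini_tonelli_F _ _ _ _ _ nu ((EFin \o K)^\+)%E
    (measurable_funepos mKe) (funepos_ge0 _)).
  apply: eq_measurable_fun h => x _; apply: eq_integral => y _.
  by rewrite !funeposE.
- have h := (@measurable_fun_fubini_tonelli_F _ _ _ _ _ nu ((EFin \o K)^\-)%E
    (measurable_funeneg mKe) (funeneg_ge0 _)).
  apply: eq_measurable_fun h => x _; apply: eq_integral => y _.
  by rewrite !funenegE.
Qed.

Lemma measurable_marg : measurable_fun setT (marg nu p).
Proof. exact: measurable_Rintegral_section. Qed.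

Lemma marg_ge0 x : 0 <= marg nu p x.
Proof. by rewrite /marg fine_ge0 // integral_ge0 // => t _; rewrite lee_fin. Qed.

Lemma post_ge0 x t : 0 <= post nu p x t.
Proof. by rewrite /post divr_ge0 // marg_ge0. Qed.

Lemma measurable_post2 : measurable_fun setT (fun z : X * Th => post nu p z.1 z.2).
Proof.
rewrite /post; apply: measurable_funM.
  by apply: eq_measurable_fun mp => -[x t].
apply: (@measurable_funV_R _ _ _ (fun z : X * Th => marg nu p z.1)).
by apply: measurableT_comp; [exact: measurable_marg|exact: measurable_fst].
Qed.

Lemma measurable_post x : measurable_fun setT (post nu p x).
Proof. exact: (measurable_fun_pair2 x measurable_post2). Qed.

Lemma measurable_Epost (K : X * Th -> R) : measurable_fun setT K ->
  measurable_fun setT (Epost nu p K).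
Proof.
move=> mK; rewrite /Epost.
apply: (measurable_Rintegral_section (K := fun z => K z * post nu p z.1 z.2)).
exact: measurable_funM mK measurable_post2.
Qed.

End Bayes1.

Section Bayes2.
Context {R : realType} {d1 d2 : measure_display}
  {X : measurableType d1} {Th : measurableType d2}.
Variables (mu : {sigma_finite_measure set X -> \bar R})
          (nu : {sigma_finite_measure set Th -> \bar R})
          (p : X * Th -> R).
Hypothesis mp : measurable_fun setT p.
Hypothesis p0 : forall z, 0 <= p z.
Hypothesis p1 : (\int[(mu \x nu)%E]_z (p z)%:E = 1)%E.

Let K x := (\int[nu]_t (p (x, t))%:E)%E.

Lemma measurable_K : measurable_fun setT K.
Proof.
have mpe : measurable_fun setT (EFin \o p) by exact/measurable_EFinP.
have h := (@measurable_fun_fubini_tonelli_F _ _ _ _ _ nu (EFin \o p) mpe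
   (fun z => p0 z)).
by apply: eq_measurable_fun h => x _.
Qed.

Lemma K_ge0 x : (0 <= K x)%E.
Proof. by apply: integral_ge0 => t _; rewrite lee_fin. Qed.

Lemma K_ae : {ae mu, forall x, setT x -> K x \is a fin_num}.
Proof.
apply: integrable_ae => //; apply/integrableP; split; first exact: measurable_K.
rewrite (eq_integral K); last by move=> x _; rewrite gee0_abs // K_ge0.
rewrite /K -(@fubini_tonelli1 _ _ _ _ _ mu nu (EFin \o p)) //.
  by rewrite p1 ltry.
exact/measurable_EFinP.
Qed.

Lemma fubini_sq (u : X * Th -> R) : measurable_fun setT u ->
  (\int[(mu \x nu)%E]_z ((u z) ^+ 2 * p z)%:E < +oo)%E ->
  wint mu (marg nu p) (Epost nu p (fun z => u z * u z)) /\
  Emarg mu nu p (Epost nu p (fun z => u z * u z)) = Ejoint mu nu p (fun z => u z * u z).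
Proof.
move=> mu_ Foo.
set F := fun z => (u z * u z * p z)%:E.
have mF : measurable_fun setT F.
  apply/measurable_EFinP; apply: measurable_funM => //; exact: measurable_funM.
have F0 z : (0 <= F z)%E by rewrite lee_fin mulr_ge0 // -expr2 sqr_ge0.
set G := fun x => (\int[nu]_t F (x, t))%E.
have mG : measurable_fun setT G := measurable_fun_fubini_tonelli_F F mF F0.
have G0 x : (0 <= G x)%E by apply: integral_ge0 => t _; exact: F0.
have hFG : (\int[(mu \x nu)%E]_z F z = \int[mu]_x G x)%E := fubini_tonelli1 F mF F0.
have Foo' : (\int[(mu \x nu)%E]_z F z < +oo)%E.
  by rewrite /F; under eq_integral do rewrite -expr2.
have Gint : mu.-integrable setT G.
  apply/integrableP; split => //.
  rewrite (eq_integral G); last by move=> x _; rewrite gee0_abs // G0.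
  by rewrite -hFG.
have Gae := integrable_ae measurableT Gint.
set e := fun x => ((Epost nu p (fun z => u z * u z) x) * marg nu p x)%:E.
have me : measurable_fun setT e.
  apply/measurable_EFinP; apply: measurable_funM; last exact: measurable_marg.
  by apply: measurable_Epost => //; exact: measurable_funM.
have e0 x : (0 <= e x)%E.
  rewrite lee_fin mulr_ge0 //; last exact: marg_ge0.
  apply: Rintegral_ge0 => t _; rewrite mulr_ge0 ?post_ge0 //.
  by rewrite -expr2 sqr_ge0.
have eG x : K x \is a fin_num -> G x \is a fin_num -> e x = G x.
  move=> Kf Gf; rewrite /e /Epost /post /marg -/(K x).
  have [mx0|mx0] := eqVneq (fine (K x)) 0.
    rewrite mx0 mulr0.
    have Kx0 : K x = 0%E by rewrite -(fineK Kf) mx0.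
    have hae : ae_eq nu setT (fun t => (p (x, t))%:E) (cst 0%E).
      apply/(ae_eq_integral_abs nu measurableT).
        exact/measurable_EFinP/measurable_fun_pair2.
      rewrite -Kx0 /K; apply: eq_integral => t _.
      by rewrite gee0_abs // lee_fin.
    rewrite /G (ae_eq_integral (cst 0%E)) //.
    - by rewrite integral0.
    - apply: measurableT_comp mF _; exact: pair1_measurable.
    - apply: filterS hae => t /= h0 _; rewrite /F.
      by have := h0 I => -[->]; rewrite mulr0.
  have mxpos : 0 < fine (K x) by rewrite lt0r mx0 fine_ge0 // K_ge0.
  rewrite /Rintegral.
  have -> : (\int[nu]_t ((u (x, t) * u (x, t)) * (p (x, t) / fine (K x)))%:E)%E =
            (G x * (fine (K x))^-1%:E)%E.
    rewrite /G -ge0_integralZr //.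
    - by apply: eq_integral => t _; rewrite /F -EFinM mulrA.
    - apply: measurableT_comp mF _; exact: pair1_measurable.
    - by rewrite lee_fin invr_ge0 ltW.
  rewrite fineM // divfK // fineK //.
have eGae : ae_eq mu setT e G.
  apply: filterS2 K_ae Gae => x hK hG _; exact: eG (hK I) (hG I).
have hint : (\int[mu]_x e x = \int[mu]_x G x)%E.
  exact: ae_eq_integral.
split.
  apply/integrableP; split => //.
  rewrite (eq_integral e); last by move=> x _; rewrite gee0_abs // e0.
  by rewrite hint -hFG.
by rewrite /Emarg /Ejoint /Rintegral -/e hint -hFG.
Qed.

End Bayes2.

Section QfLemmas.
Context {R : realType}.
Lemma qfDl n k (a b : 'cV[R]_n) (H : 'M[R]_(n, k)) c :
  qf (a + b) H c = qf a H c + qf b H c.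
Proof. by rewrite /qf linearD /= !mulmxDl mxE. Qed.
Lemma qfDr n k (a : 'cV[R]_n) (H : 'M[R]_(n, k)) b c :
  qf a H (b + c) = qf a H b + qf a H c.
Proof. by rewrite /qf mulmxDr mxE. Qed.
Lemma qfNl n k (a : 'cV[R]_n) (H : 'M[R]_(n, k)) c :
  qf (- a) H c = - qf a H c.
Proof. by rewrite /qf linearN /= !mulNmx mxE. Qed.
Lemma qfNr n k (a : 'cV[R]_n) (H : 'M[R]_(n, k)) c :
  qf a H (- c) = - qf a H c.
Proof. by rewrite /qf mulmxN mxE. Qed.
Lemma qfBm n (a : 'cV[R]_n) (A B : 'M[R]_n) :
  qf a (A - B) a = qf a A a - qf a B a.
Proof. by rewrite /qf mulmxBr mulmxBl !mxE. Qed.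
Lemma qf_delta n k (i : 'I_n) (j : 'I_k) (H : 'M[R]_(n, k)) :
  qf (delta_mx i ord0) H (delta_mx j ord0) = H i j.
Proof. by rewrite /qf trmx_delta -rowE -colE !mxE. Qed.
Lemma sum_delta n (i : 'I_n) (F : 'I_n -> R) :
  \sum_l (delta_mx i ord0 : 'cV[R]_n) l ord0 * F l = F i.
Proof.
rewrite (bigD1 i) //= big1 ?addr0; first by rewrite mxE !eqxx mul1r.
by move=> l /negbTE li; rewrite mxE li mul0r.
Qed.
End QfLemmas.

Section Integ.
Context {R : realType} {d : measure_display} {T : measurableType d}.
Variable m : {measure set T -> \bar R}.

Lemma Rint_ae_ge0 (f : T -> R) : measurable_fun setT f ->
  {ae m, forall x, 0 <= f x} -> 0 <= Rintegral m setT f.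
Proof.
move=> mf hae; rewrite /Rintegral.
have mfe : measurable_fun setT (EFin \o f) by exact/measurable_EFinP.
rewrite (ae_eq_integral ((EFin \o f)^\+)%E) //.
all: try (by apply: fine_ge0; apply: integral_ge0 => x _; exact: funepos_ge0).
all: try exact: measurable_funepos.
apply: filterS hae => x hx _; rewrite funeposE /= max_l //.
Qed.

Lemma integrable_ae_dom (f g : T -> R) :
  m.-integrable setT (EFin \o g) -> measurable_fun setT f ->
  {ae m, forall x, `|f x| <= g x} -> m.-integrable setT (EFin \o f).
Proof.
move=> gi mf hae; apply/integrableP; split; first exact/measurable_EFinP.
case/integrableP: gi => mg goo; apply: le_lt_trans goo.
apply: ae_ge0_le_integral.
all: try exact: measurableT.
all: try (by move=> x _; exact: abse_ge0).
all: try (by apply: measurableT_comp => //; exact/measurable_EFinP).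
apply: filterS hae => x hx _ /=; rewrite lee_fin.
exact: le_trans hx (ler_norm _).
Qed.

Lemma WI_sub (w : T -> R) (f h : T -> R) : wint m w f -> wint m w h ->
  WI m w (fun x => f x - h x) = WI m w f - WI m w h.
Proof.
move=> hf hh.
have -> : (fun x => f x - h x) = (fun x => f x + (-1) * h x).
  by apply/funext => x; rewrite mulN1r.
by rewrite WI_add ?WI_scale ?mulN1r //; exact: wint_scale.
Qed.

End Integ.

Section Bayes3.
Context {R : realType} {d1 d2 : measure_display}
  {X : measurableType d1} {Th : measurableType d2}.
Variables (mu : {sigma_finite_measure set X -> \bar R})
          (nu : {sigma_finite_measure set Th -> \bar R})
          (p : X * Th -> R).
Hypothesis mp : measurable_fun setT p.
Hypothesis p0 : forall z, 0 <= p z.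

Lemma Qmat_unit M (phi : 'I_M -> X * Th -> R) :
  (forall k, inL2 mu nu p (phi k)) -> lin_indep_L2 mu nu p phi ->
  Qmat mu nu p phi \in unitmx.
Proof.
move=> hphi hli; rewrite unitmxE unitfE; apply/negP => /det0P [v v0 vQ].
move/negP: v0; apply; apply/eqP/rowP => k; rewrite mxE.
set psi := fun z => \sum_k v^T k ord0 * phi k z.
have hpsi : L2w (mu \x nu)%E p psi by apply: L2w_sum.
have h0 : WI (mu \x nu)%E p (fun z => psi z * psi z) = 0.
  rewrite /psi (WI_comb mp p0 _ _ hphi hphi).
  rewrite /qf trmxK.
  have -> : (\matrix_(i, j) WI (mu \x nu)%E p (fun x => phi i x * phi j x)) =
            Qmat mu nu p phi by [].
  by rewrite vQ mul0mx mxE.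
have hint := wint_prod mp p0 hpsi hpsi.
have hfin := integrable_fin_num measurableT hint.
have hz : (\int[(mu \x nu)%E]_z (EFin \o (fun z => (psi z * psi z * p z)%R)) z = 0)%E.
  by rewrite -(fineK hfin); move: h0; rewrite /WI /Rintegral => ->.
have hae : ae_eq (mu \x nu)%E setT (EFin \o (fun z => (psi z * psi z * p z)%R)) (cst 0%E).
  apply/(ae_eq_integral_abs _ measurableT).
    by case/integrableP: hint.
  rewrite -hz; apply: eq_integral => z _ /=.
  by rewrite ger0_norm // mulr_ge0 // -expr2 sqr_ge0.
have := hli (fun k => v ord0 k).
have -> // : (fun k => v ord0 k = 0) k = (v ord0 k = 0) by [].
apply.
apply: filterS hae => z /(_ I) /= /eqP; rewrite eqe !mulf_eq0 orbb.
move=> /orP [/eqP pz0|/eqP ->]; last by rewrite eqxx.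
move=> _; rewrite /psi in pz0; rewrite -[X in _ = X]pz0.
by apply: eq_bigr => i _; rewrite mxE.
Qed.

End Bayes3.

Section AeLemmas.
Context {R : realType} {d : measure_display} {T : measurableType d}.
Variable m : {measure set T -> \bar R}.
Lemma aeS (P Q : T -> Prop) : (forall x, P x -> Q x) ->
  {ae m, forall x, P x} -> {ae m, forall x, Q x}.
Proof. move=> PQ; exact: (@filterS _ _ (ae_filter_ringOfSetsType m) P Q PQ). Qed.
Lemma aeI (P Q : T -> Prop) : {ae m, forall x, P x} -> {ae m, forall x, Q x} ->
  {ae m, forall x, P x /\ Q x}.
Proof. exact: (@filterI _ _ (ae_filter_ringOfSetsType m) P Q). Qed.
End AeLemmas.

Section Main.
Context {R : realType} {d1 d2 : measure_display}
  {X : measurableType d1} {Th : measurableType d2}.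
Variables (mu : {sigma_finite_measure set X -> \bar R})
          (nu : {sigma_finite_measure set Th -> \bar R})
          (p : X * Th -> R) (L M : nat)
          (g : 'I_L -> X * Th -> R) (phi : 'I_M -> X * Th -> R)
          (zeta : 'I_L -> X * Th -> R).
Hypothesis hpdf : is_joint_pdf mu nu p.
Hypothesis hg : forall l, inW2 mu nu p (g l).
Hypothesis hphi : forall m, inW2 mu nu p (phi m).
Hypothesis hli : lin_indep_L2 mu nu p phi.
Hypothesis hz : forall l, inW2 mu nu p (zeta l).
Hypothesis horth : {ae mu, forall x, suppX nu p x ->
     forall l m, Epost nu p (fun z => zeta l z * phi m z) x = 0}.
Hypothesis hunit : {ae mu, forall x, suppX nu p x -> Qpost nu p phi x \in unitmx}.

Let mp : measurable_fun setT p. Proof. by case: hpdf. Qed.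
Let p0 : forall z, 0 <= p z. Proof. by case: hpdf. Qed.
Let p1 : (\int[(mu \x nu)%E]_z (p z)%:E = 1)%E. Proof. by case: hpdf. Qed.

Let mpost x := measurable_post nu mp x.
Let post0 x := post_ge0 nu p0 x.

Definition good x := [/\ (forall l, L2w nu (post nu p x) (fun t => g l (x, t))),
  (forall l, L2w nu (post nu p x) (fun t => zeta l (x, t))),
  (forall k, L2w nu (post nu p x) (fun t => phi k (x, t))),
  (forall l k, Epost nu p (fun z => zeta l z * phi k z) x = 0) &
  Qpost nu p phi x \in unitmx].

Lemma W2_ae n (f : 'I_n -> X * Th -> R) : (forall i, inW2 mu nu p (f i)) ->
  {ae mu, forall x, suppX nu p x -> forall i, L2w nu (post nu p x) (fun t => f i (x, t))}.
Proof.
move=> hf.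
have H0 := filter_forall (ae_filter_ringOfSetsType mu) (fun i => (hf i).2).
apply: filterS H0 => x h sx i; split; last exact: h i sx.
exact: (measurable_fun_pair2 x (hf i).1.1).
Qed.

Lemma good_ae : {ae mu, forall x, suppX nu p x -> good x}.
Proof.
have H0 := aeI (aeI (W2_ae hg) (W2_ae hz)) (aeI (W2_ae hphi) (aeI horth hunit)).
by apply: aeS H0 => x [[a b] [c [e f]]] sx; split; auto.
Qed.

Definition Hx x := Rpost nu p g phi x *m invmx (Qpost nu p phi x) *m (Rpost nu p g phi x)^T.

Definition mmx n k (A : X -> 'M[R]_(n, k)) := forall i j, measurable_fun setT (fun x => A x i j).

Lemma mmx_mul n k l (A : X -> 'M[R]_(n, k)) (B : X -> 'M[R]_(k, l)) :
  mmx A -> mmx B -> mmx (fun x => A x *m B x).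
Proof.
move=> hA hB i j; under eq_fun do rewrite mxE.
by apply: measurable_sum_R => h; apply: measurable_funM.
Qed.

Lemma mmx_tr n k (A : X -> 'M[R]_(n, k)) : mmx A -> mmx (fun x => (A x)^T).
Proof. by move=> hA i j; under eq_fun do rewrite mxE; exact: hA. Qed.

Lemma mmx_Rpost : mmx (Rpost nu p g phi).
Proof.
move=> i j; under eq_fun do rewrite mxE.
apply: measurable_Epost => //; apply: measurable_funM.
- exact: (hg i).1.1.
- exact: (hphi j).1.1.
Qed.

Lemma mmx_Qpost : mmx (Qpost nu p phi).
Proof.
move=> i j; under eq_fun do rewrite mxE.
apply: measurable_Epost => //; apply: measurable_funM.
- exact: (hphi i).1.1.
- exact: (hphi j).1.1.
Qed.

Lemma Hx_meas i j : measurable_fun setT (fun x => Hx x i j).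
Proof.
apply: mmx_mul; last exact/mmx_tr/mmx_Rpost.
apply: mmx_mul; first exact: mmx_Rpost.
exact/measurable_invmx/mmx_Qpost.
Qed.

Lemma Qpost_sym x : (Qpost nu p phi x)^T = Qpost nu p phi x.
Proof.
apply/matrixP => i j; rewrite !mxE /Epost.
by apply: eq_Rintegral => t _; rewrite (mulrC (phi j _)).
Qed.

Lemma Hx_sym x : (Hx x)^T = Hx x.
Proof. by rewrite /Hx !trmx_mul trmxK trmx_inv Qpost_sym mulmxA. Qed.

Let U i z := g i z - zeta i z.

Lemma hU i : inL2 mu nu p (U i).
Proof. exact: (L2w_sub mp p0 (hg i).1 (hz i).1). Qed.

Lemma EU_wint i : wint mu (marg nu p) (Epost nu p (fun z => U i z * U i z)).
Proof. exact: (fubini_sq mp p0 p1 (hU i).1 (hU i).2).1. Qed.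

Lemma Hx_bound i j x : good x ->
  `|Hx x i j| <= Epost nu p (fun z => U i z * U i z) x + Epost nu p (fun z => U j z * U j z) x.
Proof.
case=> hgx hzx hphx hox hux.
have P0 v : 0 <= qf v (Hx x) v :=
  pointwise_P0 (mpost x) (post0 x) (fun l t => g l (x, t)) hphx hux v.
have P1 v : qf v (Hx x) v <= Epost nu p (fun z =>
   (\sum_l v l ord0 * (g l z - zeta l z)) * (\sum_l v l ord0 * (g l z - zeta l z))) x :=
  pointwise_P1 (mpost x) (post0 x) hgx hzx hphx hox hux v.
have Pd k : Hx x k k <= Epost nu p (fun z => U k z * U k z) x.
  have := P1 (delta_mx k ord0); rewrite qf_delta.
  have -> // : (fun z => (\sum_l (delta_mx k ord0 : 'cV[R]_L) l ord0 * (g l z - zeta l z)) *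
                      (\sum_l (delta_mx k ord0 : 'cV[R]_L) l ord0 * (g l z - zeta l z))) =
             (fun z => U k z * U k z).
  by apply/funext => z; rewrite !(sum_delta k (fun l => g l z - zeta l z)).
have D0 k : 0 <= Hx x k k by have := P0 (delta_mx k ord0); rewrite qf_delta.
have Hji : Hx x j i = Hx x i j by rewrite -[in LHS]Hx_sym mxE.
have Pp := P0 (delta_mx i ord0 + delta_mx j ord0).
rewrite qfDl !qfDr !qf_delta Hji in Pp.
have Pm := P0 (delta_mx i ord0 - delta_mx j ord0).
rewrite qfDl !qfDr !qfNl !qfNr !qf_delta Hji in Pm.
have := Pd i; have := Pd j; have := D0 i; have := D0 j.
move=> *; rewrite ler_norml; apply/andP; split; lra.
Qed.

Lemma Hx_wint i j : wint mu (marg nu p) (fun x => Hx x i j).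
Proof.
rewrite /wint.
apply: (integrable_ae_dom (g := fun x =>
  (Epost nu p (fun z => U i z * U i z) x + Epost nu p (fun z => U j z * U j z) x)
  * marg nu p x)).
- have -> : EFin \o (fun x => (Epost nu p (fun z => U i z * U i z) x +
       Epost nu p (fun z => U j z * U j z) x) * marg nu p x) =
    (EFin \o (fun x => Epost nu p (fun z => U i z * U i z) x * marg nu p x)) \+
    (EFin \o (fun x => Epost nu p (fun z => U j z * U j z) x * marg nu p x)).
    by apply/funext => x /=; rewrite mulrDl EFinD.
  by apply: integrableD => //; exact: EU_wint.
- apply: measurable_funM; first exact: Hx_meas.
  exact: measurable_marg.
- apply: aeS good_ae => x hx.
  have [m0|m0] := eqVneq (marg nu p x) 0.
    by rewrite m0 !mulr0 normr0.
  have sx : suppX nu p x by rewrite /suppX /= lt0r m0 marg_ge0.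
  rewrite normrM (ger0_norm (marg_ge0 _ p0 x)).
  by apply: ler_wpM2r; [exact: marg_ge0|exact: Hx_bound (hx sx)].
Qed.

Lemma qH_sum v x : qf v (Hx x) v = \sum_i \sum_j v i ord0 * v j ord0 * Hx x i j.
Proof. exact: qfE. Qed.

Lemma qH_wint v : wint mu (marg nu p) (fun x => qf v (Hx x) v).
Proof.
have -> : (fun x => qf v (Hx x) v) =
   (fun x => \sum_i \sum_j v i ord0 * v j ord0 * Hx x i j).
  by apply/funext => x; exact: qH_sum.
apply: wint_sum => i; apply: wint_sum => j; apply: wint_scale; exact: Hx_wint.
Qed.

Lemma qH_meas v : measurable_fun setT (fun x => qf v (Hx x) v).
Proof.
have -> : (fun x => qf v (Hx x) v) =
   (fun x => \sum_i \sum_j v i ord0 * v j ord0 * Hx x i j).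
  by apply/funext => x; exact: qH_sum.
apply: measurable_sum_R => i; apply: measurable_sum_R => j.
apply: measurable_funM; [exact: measurable_cst|exact: Hx_meas].
Qed.

Lemma mid_qf v : qf v (middle_mat mu nu p g phi) v =
  Emarg mu nu p (fun x => qf v (Hx x) v).
Proof.
have -> : (fun x => qf v (Hx x) v) =
   (fun x => \sum_i \sum_j v i ord0 * v j ord0 * Hx x i j).
  by apply/funext => x; exact: qH_sum.
rewrite qfE.
change (Emarg mu nu p) with (WI mu (marg nu p)).
rewrite WI_sum; last first.
  by move=> i; apply: wint_sum => j; apply: wint_scale; exact: Hx_wint.
apply: eq_bigr => i _; rewrite WI_sum; last first.
  by move=> j; apply: wint_scale; exact: Hx_wint.
apply: eq_bigr => j _; rewrite WI_scale; last exact: Hx_wint.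
by rewrite mxE.
Qed.

Lemma wint_sub' (f h : X -> R) : wint mu (marg nu p) f -> wint mu (marg nu p) h ->
  wint mu (marg nu p) (fun x => f x - h x).
Proof.
move=> hf hh.
have -> : (fun x => f x - h x) = (fun x => f x + (-1) * h x).
  by apply/funext => x; rewrite mulN1r.
by apply: wint_add => //; exact: wint_scale.
Qed.

Lemma ineq1 v : 0 <= qf v (Qmat mu nu p (fun l z => g l z - zeta l z) -
                           middle_mat mu nu p g phi) v.
Proof.
rewrite qfBm mid_qf.
set u := fun z => \sum_l v l ord0 * U l z.
have hu : inL2 mu nu p u by apply: (L2w_sum mp p0) => l; exact: hU.
have E1 : Ejoint mu nu p (fun z => u z * u z) =
          qf v (Qmat mu nu p (fun l z => g l z - zeta l z)) v :=
  WI_comb mp p0 v v hU hU.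
have [wE EE] := fubini_sq mp p0 p1 hu.1 hu.2.
rewrite -E1 -EE.
change (Emarg mu nu p) with (WI mu (marg nu p)).
rewrite -WI_sub //; last exact: qH_wint.
apply: Rint_ae_ge0.
  apply: measurable_funM; last exact: measurable_marg.
  apply: measurable_funB; last exact: qH_meas.
  apply: measurable_Epost => //; apply: measurable_funM; exact: hu.1.
apply: aeS good_ae => x hx.
have [m0|m0] := eqVneq (marg nu p x) 0; first by rewrite m0 mulr0.
have sx : suppX nu p x by rewrite /suppX /= lt0r m0 marg_ge0.
case: (hx sx) => hgx hzx hphx hox hux.
apply: mulr_ge0; last exact: marg_ge0.
rewrite subr_ge0.
exact: (pointwise_P1 (mpost x) (post0 x) hgx hzx hphx hox hux v).
Qed.

Lemma Qmat_sym : (Qmat mu nu p phi)^T = Qmat mu nu p phi.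
Proof.
apply/matrixP => i j; rewrite !mxE /Ejoint.
by apply: eq_Rintegral => t _; rewrite (mulrC (phi j _)).
Qed.

Lemma ineq2 v : 0 <= qf v (middle_mat mu nu p g phi -
   Rmat mu nu p g phi *m invmx (Qmat mu nu p phi) *m (Rmat mu nu p g phi)^T) v.
Proof.
rewrite qfBm mid_qf.
have Qu := Qmat_unit mp p0 (fun k => (hphi k).1) hli.
set Qp := Qmat mu nu p phi.
set Rm := Rmat mu nu p g phi.
set a := invmx Qp *m Rm^T *m v.
set ug := fun z => \sum_l v l ord0 * g l z.
set ua := fun z => \sum_k a k ord0 * phi k z.
have hug : inL2 mu nu p ug by apply: (L2w_sum mp p0) => l; exact: (hg l).1.
have hua : inL2 mu nu p ua by apply: (L2w_sum mp p0) => k; exact: (hphi k).1.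
have hd : inL2 mu nu p (fun z => ug z - ua z) by exact: L2w_sub.
have E2 : qf v (Rm *m invmx Qp *m Rm^T) v =
   Ejoint mu nu p (fun z => ug z * ug z) -
   Ejoint mu nu p (fun z => (ug z - ua z) * (ug z - ua z)).
  have := WI_sqB mp p0 hug hua.
  rewrite /Ejoint -/(WI _ _ _).
  change (Rintegral (mu \x nu)%E setT (fun z => (ug z - ua z) * (ug z - ua z) * p z))
    with (WI (mu \x nu)%E p (fun z => (ug z - ua z) * (ug z - ua z))).
  move=> ->.
  have -> : WI (mu \x nu)%E p (fun x => ug x * ua x) = qf v Rm a.
    exact: (WI_comb mp p0 v a (fun l => (hg l).1) (fun k => (hphi k).1)).
  have -> : WI (mu \x nu)%E p (fun x => ua x * ua x) = qf v (Rm *m invmx Qp *m Rm^T) v.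
    rewrite (WI_comb mp p0 a a (fun k => (hphi k).1) (fun k => (hphi k).1)).
    rewrite -/Qp qf_w_Q ?Qmat_sym //.
    exact: qf_w_left.
  rewrite /a qf_w_left; lra.
have [wg Eg] := fubini_sq mp p0 p1 hug.1 hug.2.
have [wd Ed] := fubini_sq mp p0 p1 hd.1 hd.2.
rewrite E2 -Eg -Ed.
change (Emarg mu nu p) with (WI mu (marg nu p)).
have -> : forall A B C : R, A - (B - C) = (A - B) + C by move=> *; ring.
rewrite -WI_sub //; last exact: qH_wint.
rewrite -WI_add //; last by apply: wint_sub' => //; exact: qH_wint.
apply: Rint_ae_ge0.
  apply: measurable_funM; last exact: measurable_marg.
  apply: measurable_funD; last first.
    apply: measurable_Epost => //; apply: measurable_funM; exact: hd.1.
  apply: measurable_funB; first exact: qH_meas.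
  apply: measurable_Epost => //; apply: measurable_funM; exact: hug.1.
apply: aeS good_ae => x hx.
have [m0|m0] := eqVneq (marg nu p x) 0; first by rewrite m0 mulr0.
have sx : suppX nu p x by rewrite /suppX /= lt0r m0 marg_ge0.
case: (hx sx) => hgx hzx hphx hox hux.
apply: mulr_ge0; last exact: marg_ge0.
have h : Epost nu p (fun z => ug z * ug z) x -
   Epost nu p (fun z => (ug z - ua z) * (ug z - ua z)) x <= qf v (Hx x) v :=
  pointwise_P2 (mpost x) (post0 x) hgx hphx hux v a.
lra.
Qed.

End Main.

Theorem theorem2 (R : realType) (d1 d2 : measure_display)
  (X : measurableType d1) (Th : measurableType d2)
  (mu : {sigma_finite_measure set X -> \bar R})
  (nu : {sigma_finite_measure set Th -> \bar R})
  (p : X * Th -> R) (L M : nat)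
  (g : 'I_L -> X * Th -> R) (phi : 'I_M -> X * Th -> R)
  (zeta : 'I_L -> X * Th -> R) :
  is_joint_pdf mu nu p ->
  (forall l, inW2 mu nu p (g l)) ->
  (forall m, inW2 mu nu p (phi m)) ->
  lin_indep_L2 mu nu p phi ->
  (forall l, inW2 mu nu p (zeta l)) ->
  {ae mu, forall x, suppX nu p x ->
     forall l m, Epost nu p (fun z => zeta l z * phi m z) x = 0} ->
  {ae mu, forall x, suppX nu p x -> Qpost nu p phi x \in unitmx} ->
  loewner_ge (Qmat mu nu p (fun l z => g l z - zeta l z))
             (middle_mat mu nu p g phi)
  /\
  loewner_ge (middle_mat mu nu p g phi)
             (Rmat mu nu p g phi *m invmx (Qmat mu nu p phi) *m (Rmat mu nu p g phi)^T).
Proof.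
move=> hpdf hg hphi hli hz horth hunit; split => v.
- exact: (ineq1 hpdf hg hphi hz horth hunit v).
- exact: (ineq2 hpdf hg hphi hli hz horth hunit v).
Qed.
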